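(* Let $\mathcal{X}=\mathcal{UD}(\chi,T',\theta)$ be the crystal on $\mathbb{Z}^6$ obtained by ultra-discretizing the positive geometric crystal $\chi$ of type $G_2^{(1)}$ described in the context, and let $B_\infty$ be the $D_4^{(3)}$-crystal described in the context. Then $\mathcal{X}$ is isomorphic to $B_\infty$ as a crystal, i.e. there is a bijection $\Omega:\mathcal{X}\to B_\infty$ such that $\Omega\circ\tilde e_i=\tilde e_i\circ\Omega$, $\Omega\circ\tilde f_i=\tilde f_i\circ\Omega$, $\varepsilon_i\circ\Omega=\varepsilon_i$ and $\varphi_i\circ\Omega=\varphi_i$ (hence also $\mathrm{wt}_i\circ\Omega=\mathrm{wt}_i$) for all $i\in\{0,1,2\}$.
   Context: Index set $I=\{0,1,2\}$. The affine Lie algebra $\mathfrak g$ of type $G_2^{(1)}$ has Cartan matrix $(a_{ij})_{i,j=0,1,2}$ with rows $(2,-1,0),(-1,2,-1),(0,-3,2)$; its Langlands dual is of type $D_4^{(3)}$, whose Cartan matrix has rows $(2,-1,0),(-1,2,-3),(0,-1,2)$. The geometric crystal $\chi$. Its underlying variety is the algebraic torus $T'=(\mathbb C^\times)^6$ with coordinates $x=(x_0,\dots,x_5)$ (realized in the paper, via the positive structure $\theta$, as $\{Y_0(x_0)Y_1(x_1)Y_2(x_2)Y_1(x_3)Y_2(x_4)Y_1(x_5)v\}$ inside the 15-dimensional fundamental representation $W(\varpi_1)$ of $G_2^{(1)}$, $v$ a highest vector; in the coordinates $x$ the structure is as follows). For $c\in\mathbb C^\times$: $i=1$: put $a=\frac{x_0}{x_1}$,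 $b=\frac{x_0x_2^3}{x_1^2x_3}$, $d=\frac{x_0x_2^3x_4^3}{x_1^2x_3^2x_5}$. Then $e_1^c(x)=(x_0,\mathcal C_1x_1,x_2,\mathcal C_3x_3,x_4,\mathcal C_5x_5)$ with $\mathcal C_1=\frac{ca+b+d}{a+b+d}$, $\mathcal C_3=\frac{ca+cb+d}{ca+b+d}$, $\mathcal C_5=\frac{c(a+b+d)}{ca+cb+d}$; $\varepsilon_1(x)=a+b+d$; $\gamma_1(x)=\frac{x_1^2x_3^2x_5^2}{x_0x_2^3x_4^3}$. $i=2$: put $p=\frac{x_1}{x_2}$, $q=\frac{x_1x_3}{x_2^2x_4}$. Then $e_2^c(x)=(x_0,x_1,\mathcal C_2x_2,x_3,\mathcal C_4x_4,x_5)$ with $\mathcal C_2=\frac{cp+q}{p+q}$, $\mathcal C_4=\frac{c(p+q)}{cp+q}$; $\varepsilon_2(x)=p+q$; $\gamma_2(x)=\frac{x_2^2x_4^2}{x_1x_3x_5}$. $i=0$: put $D=c^2x_0^2x_2^3x_3+x_1x_2^3x_3^2x_5+cx_0\big(x_1x_3^3+3x_1x_2x_3^2x_4+3x_1x_2^2x_3x_4^2+x_2^3(x_3^2+x_1x_4^3+x_1x_3x_5)\big)$, $E=x_0^2x_2^3x_3+x_1x_2^3x_3^2x_5+x_0\big(x_1x_3^3+3x_1x_2x_3^2x_4+3x_1x_2^2x_3x_4^2+x_2^3(x_3^2+x_1x_4^3+x_1x_3x_5)\big)$, $F=cx_0^2x_2^3x_3+x_1x_2^3x_3^2x_5+x_0\big(cx_1x_3^3+3cx_1x_2x_3^2x_4+3cx_1x_2^2x_3x_4^2+x_2^3(x_3^2+cx_1x_4^3+cx_1x_3x_5)\big)$,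 $G=cx_0^2x_2^3x_3+x_1x_2^3x_3^2x_5+x_0\big(x_1x_3^3+(2+c)x_1x_2x_3^2x_4+(1+2c)x_1x_2^2x_3x_4^2+x_2^3(x_3^2+cx_1x_4^3+cx_1x_3x_5)\big)$, $H=cx_0^2x_2^3x_3+x_1x_2^3x_3^2x_5+x_0\big(x_1x_3^3+3x_1x_2x_3^2x_4+3x_1x_2^2x_3x_4^2+x_2^3(x_3^2+x_1x_4^3+cx_1x_3x_5)\big)$. Then $e_0^c(x)=\big(\frac{D}{cE}x_0,\frac{F}{cE}x_1,\frac{G}{cE}x_2,\frac{DH}{c^2EF}x_3,\frac{D}{cG}x_4,\frac{D}{cH}x_5\big)$, $\varepsilon_0(x)=\frac{E}{x_0^3x_2^3x_3}$, $\gamma_0(x)=\frac{x_0^2}{x_1x_3x_5}$. All these are ratios of polynomials with positive coefficients (positive structure). Ultra-discretization. For a rational function $f(c,x)=g/h$ with $g,h$ polynomials in $c,x_0,\dots,x_5$ with positive coefficients, and $(k,n)\in\mathbb Z\times\mathbb Z^6$, set $\mathcal{UD}(f)(k,n)=\deg_t f(t^k,t^{n_0},\dots,t^{n_5})$, the degree (order of pole at $t=\infty$) in the variable $t$; equivalently $\max$ over monomials of $g$ of the linear form given by the exponents, minus the same for $h$. The crystal $\mathcal X=\mathcal{UD}(\chi,T',\theta)$ has underlying set $\mathbb Z^6\ni n=(n_0,\dots,n_5)$ and: if $e_i^c(x)=(x_0R_0(c,x),\dots,x_5R_5(c,x))$, then $\tilde e_i(n)=(n_j+\mathcal{UD}(R_j)(1,n))_{j=0}^5$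 and $\tilde f_i(n)=(n_j+\mathcal{UD}(R_j)(-1,n))_{j=0}^5$; $\mathrm{wt}_i(n)=\mathcal{UD}(\gamma_i)(n)$, $\varepsilon_i(n)=\mathcal{UD}(\varepsilon_i)(n)$, $\varphi_i(n)=\varepsilon_i(n)+\mathrm{wt}_i(n)$. The crystal $B_\infty$ of type $D_4^{(3)}$. Its underlying set is $\{b=(b_1,b_2,b_3,\bar b_3,\bar b_2,\bar b_1)\in\mathbb Z^6: b_3\equiv\bar b_3 \pmod 2\}$. Write $(y)_+=\max(y,0)$. Set $s(b)=b_1+b_2+\frac{b_3+\bar b_3}{2}+\bar b_2+\bar b_1$, $z_1=\bar b_1-b_1$, $z_2=\bar b_2-\bar b_3$, $z_3=b_3-b_2$, $z_4=(\bar b_3-b_3)/2$, and $\max A=\max(0,z_1,z_1+z_2,z_1+z_2+3z_4,z_1+z_2+z_3+3z_4,2z_1+z_2+z_3+3z_4)$. Then $\varepsilon_1(b)=\bar b_1+(\bar b_3-\bar b_2+(b_2-b_3)_+)_+$, $\varphi_1(b)=b_1+(b_3-b_2+(\bar b_2-\bar b_3)_+)_+$; $\varepsilon_2(b)=\bar b_2+\frac12(b_3-\bar b_3)_+$, $\varphi_2(b)=b_2+\frac12(\bar b_3-b_3)_+$; $\varepsilon_0(b)=-s(b)+\max A-(2z_1+z_2+z_3+3z_4)$, $\varphi_0(b)=-s(b)+\max A$; $\mathrm{wt}_i=\varphi_i-\varepsilon_i$. $\tilde e_1b$ equals: $(\dots,\bar b_2+1,\bar b_1-1)$ if $\bar b_2-\bar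 b_3\ge(b_2-b_3)_+$; $(\dots,b_3+1,\bar b_3-1,\dots)$ if $\bar b_2-\bar b_3<0\le b_3-b_2$; $(b_1+1,b_2-1,\dots)$ if $(\bar b_2-\bar b_3)_+<b_2-b_3$. $\tilde f_1b$ equals: $(b_1-1,b_2+1,\dots)$ if $(\bar b_2-\bar b_3)_+\le b_2-b_3$; $(\dots,b_3-1,\bar b_3+1,\dots)$ if $\bar b_2-\bar b_3\le0<b_3-b_2$; $(\dots,\bar b_2-1,\bar b_1+1)$ if $\bar b_2-\bar b_3>(b_2-b_3)_+$. $\tilde e_2b$ equals $(\dots,\bar b_3+2,\bar b_2-1,\dots)$ if $\bar b_3\ge b_3$, and $(\dots,b_2+1,b_3-2,\dots)$ if $\bar b_3<b_3$. $\tilde f_2b$ equals $(\dots,b_2-1,b_3+2,\dots)$ if $\bar b_3\le b_3$, and $(\dots,\bar b_3-2,\bar b_2+1,\dots)$ if $\bar b_3>b_3$. (Here ''$\dots$'' means the unlisted coordinates are unchanged.) For $\tilde e_0$ consider the conditions $(E_1)$: $z_1+z_2+z_3+3z_4<0$, $z_1+z_2+3z_4<0$, $z_1+z_2<0$, $z_1<0$; $(E_2)$: $z_1+z_2+z_3+3z_4<0$, $z_2+3z_4<0$, $z_2<0$, $z_1\ge0$; $(E_3)$: $z_1+z_3+3z_4<0$, $z_3+3z_4<0$, $z_4<0$, $z_2\ge0$, $z_1+z_2\ge0$; $(E_4)$: $z_1+z_2+3z_4\ge0$, $z_2+3z_4\ge0$, $z_4\ge0$, $z_3<0$, $z_1+z_3<0$;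 $(E_5)$: $z_1+z_2+z_3+3z_4\ge0$, $z_3+3z_4\ge0$, $z_3\ge0$, $z_1<0$; $(E_6)$: $z_1+z_2+z_3+3z_4\ge0$, $z_1+z_3+3z_4\ge0$, $z_1+z_3\ge0$, $z_1\ge0$; and let $(F_j)$ be $(E_j)$ with $\ge$ replaced by $>$ and $<$ replaced by $\le$. Then $\tilde e_0b$ equals, under $(E_1)$ through $(E_6)$ respectively: $(b_1-1,\dots)$; $(\dots,b_3-1,\bar b_3-1,\dots,\bar b_1+1)$; $(\dots,b_3-2,\dots,\bar b_2+1,\dots)$; $(\dots,b_2-1,\dots,\bar b_3+2,\dots)$; $(b_1-1,\dots,b_3+1,\bar b_3+1,\dots)$; $(\dots,\bar b_1+1)$. And $\tilde f_0b$ equals, under $(F_1)$ through $(F_6)$ respectively: $(b_1+1,\dots)$; $(\dots,b_3+1,\bar b_3+1,\dots,\bar b_1-1)$; $(\dots,b_3+2,\dots,\bar b_2-1,\dots)$; $(\dots,b_2+1,\dots,\bar b_3-2,\dots)$; $(b_1+1,\dots,b_3-1,\bar b_3-1,\dots)$; $(\dots,\bar b_1-1)$. $B_\infty$ is the limit of the coherent family of perfect crystals of type $D_4^{(3)}$. *)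

(* Defs.v *)
From HB Require Import structures.
From mathcomp Require Import all_boot all_order all_algebra.
Set Implicit Arguments. Unset Strict Implicit. Unset Printing Implicit Defensive.
Import Order.TTheory GRing.Theory Num.Theory.
Local Open Scope ring_scope.

Definition vec6 := {ffun 'I_6 -> int}.

Definition mk6 (a0 a1 a2 a3 a4 a5 : int) : vec6 :=
  [ffun j : 'I_6 => nth 0 [:: a0; a1; a2; a3; a4; a5] j].

(* Subtraction-free rational expressions in the variables             *)
(* c, x_0, ..., x_5 (variable index 0 is c, index j.+1 is x_j).       *)
Inductive pexpr : Type :=
| PV  : nat -> pexpr
| PK  : nat -> pexpr               (* the positive constant k.+1 *)
| PAdd : pexpr -> pexpr -> pexpr
| PMul : pexpr -> pexpr -> pexpr
| PDiv : pexpr -> pexpr -> pexpr.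

(* Laurent polynomials with positive coefficients, as lists of monomials
   (coefficient, exponent vector of length 7 : (c, x_0, ..., x_5)). *)
Definition mono := (nat * seq int)%type.
Definition ppoly := seq mono.

Definition mono_mul (m1 m2 : mono) : mono :=
  ((m1.1 * m2.1)%N, [seq p.1 + p.2 | p <- zip m1.2 m2.2]).
Definition ppoly_mul (p q : ppoly) : ppoly :=
  [seq mono_mul m1 m2 | m1 <- p, m2 <- q].
Definition ppoly_var (j : nat) : ppoly :=
  [:: (1%N, [seq ((i == j) : nat)%:Z | i <- iota 0 7])].
Definition ppoly_const (k : nat) : ppoly := [:: (k.+1, nseq 7 0)].

Fixpoint to_frac (e : pexpr) : ppoly * ppoly :=
  match e with
  | PV j => (ppoly_var j, ppoly_const 0)
  | PK k => (ppoly_const k, ppoly_const 0)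
  | PAdd e1 e2 => let (g1, h1) := to_frac e1 in let (g2, h2) := to_frac e2 in
      (ppoly_mul g1 h2 ++ ppoly_mul g2 h1, ppoly_mul h1 h2)
  | PMul e1 e2 => let (g1, h1) := to_frac e1 in let (g2, h2) := to_frac e2 in
      (ppoly_mul g1 g2, ppoly_mul h1 h2)
  | PDiv e1 e2 => let (g1, h1) := to_frac e1 in let (g2, h2) := to_frac e2 in
      (ppoly_mul g1 h2, ppoly_mul h1 g2)
  end.

Definition maxl (s : seq int) : int := foldr Num.max (head 0 s) s.

Definition mono_lin (k : int) (n : vec6) (m : mono) : int :=
  \sum_(i < 7) nth 0 m.2 i * nth 0 (k :: [seq n j | j <- enum 'I_6]) i.

(* deg_t g(t^k, t^n_0, ..., t^n_5) for g with positive coefficients. *)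
Definition UDpoly (p : ppoly) (k : int) (n : vec6) : int :=
  maxl [seq mono_lin k n m | m <- p].

Definition UD (e : pexpr) (k : int) (n : vec6) : int :=
  UDpoly (to_frac e).1 k n - UDpoly (to_frac e).2 k n.

Declare Scope pexpr_scope.
Delimit Scope pexpr_scope with PE.
Local Notation "a + b" := (PAdd a b) : pexpr_scope.
Local Notation "a * b" := (PMul a b) : pexpr_scope.
Local Notation "a / b" := (PDiv a b) : pexpr_scope.
Local Open Scope pexpr_scope.

Definition vc : pexpr := PV 0.
Definition vx (j : nat) : pexpr := PV j.+1.
Definition one : pexpr := PK 0.
Definition cst (k : nat) : pexpr := PK k.-1.   (* positive constant k >= 1 *)
Fixpoint ppow (e : pexpr) (n : nat) : pexpr :=
  match n with 0 => one | 1 => e | n'.+1 => e * ppow e n' end.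

Notation "x^ j" := (vx j) (at level 2) : pexpr_scope.

Definition a1 : pexpr := vx 0 / vx 1.
Definition b1 : pexpr := (vx 0 * ppow (vx 2) 3) / (ppow (vx 1) 2 * vx 3).
Definition d1 : pexpr :=
  (vx 0 * ppow (vx 2) 3 * ppow (vx 4) 3) / (ppow (vx 1) 2 * ppow (vx 3) 2 * vx 5).
Definition C1 : pexpr := (vc * a1 + b1 + d1) / (a1 + b1 + d1).
Definition C3 : pexpr := (vc * a1 + vc * b1 + d1) / (vc * a1 + b1 + d1).
Definition C5 : pexpr := (vc * (a1 + b1 + d1)) / (vc * a1 + vc * b1 + d1).
Definition eps1 : pexpr := a1 + b1 + d1.
Definition gam1 : pexpr :=
  (ppow (vx 1) 2 * ppow (vx 3) 2 * ppow (vx 5) 2) / (vx 0 * ppow (vx 2) 3 * ppow (vx 4) 3).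

Definition p2 : pexpr := vx 1 / vx 2.
Definition q2 : pexpr := (vx 1 * vx 3) / (ppow (vx 2) 2 * vx 4).
Definition C2 : pexpr := (vc * p2 + q2) / (p2 + q2).
Definition C4 : pexpr := (vc * (p2 + q2)) / (vc * p2 + q2).
Definition eps2 : pexpr := p2 + q2.
Definition gam2 : pexpr := (ppow (vx 2) 2 * ppow (vx 4) 2) / (vx 1 * vx 3 * vx 5).

Definition x0 := vx 0. Definition x1 := vx 1. Definition x2 := vx 2.
Definition x3 := vx 3. Definition x4 := vx 4. Definition x5 := vx 5.

Definition D0 : pexpr :=
  ppow vc 2 * ppow x0 2 * ppow x2 3 * x3 + x1 * ppow x2 3 * ppow x3 2 * x5
  + vc * x0 * (x1 * ppow x3 3 + cst 3 * x1 * x2 * ppow x3 2 * x4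
               + cst 3 * x1 * ppow x2 2 * x3 * ppow x4 2
               + ppow x2 3 * (ppow x3 2 + x1 * ppow x4 3 + x1 * x3 * x5)).
Definition E0 : pexpr :=
  ppow x0 2 * ppow x2 3 * x3 + x1 * ppow x2 3 * ppow x3 2 * x5
  + x0 * (x1 * ppow x3 3 + cst 3 * x1 * x2 * ppow x3 2 * x4
          + cst 3 * x1 * ppow x2 2 * x3 * ppow x4 2
          + ppow x2 3 * (ppow x3 2 + x1 * ppow x4 3 + x1 * x3 * x5)).
Definition F0 : pexpr :=
  vc * ppow x0 2 * ppow x2 3 * x3 + x1 * ppow x2 3 * ppow x3 2 * x5
  + x0 * (vc * x1 * ppow x3 3 + cst 3 * vc * x1 * x2 * ppow x3 2 * x4
          + cst 3 * vc * x1 * ppow x2 2 * x3 * ppow x4 2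
          + ppow x2 3 * (ppow x3 2 + vc * x1 * ppow x4 3 + vc * x1 * x3 * x5)).
Definition G0 : pexpr :=
  vc * ppow x0 2 * ppow x2 3 * x3 + x1 * ppow x2 3 * ppow x3 2 * x5
  + x0 * (x1 * ppow x3 3 + (cst 2 + vc) * x1 * x2 * ppow x3 2 * x4
          + (one + cst 2 * vc) * x1 * ppow x2 2 * x3 * ppow x4 2
          + ppow x2 3 * (ppow x3 2 + vc * x1 * ppow x4 3 + vc * x1 * x3 * x5)).
Definition H0 : pexpr :=
  vc * ppow x0 2 * ppow x2 3 * x3 + x1 * ppow x2 3 * ppow x3 2 * x5
  + x0 * (x1 * ppow x3 3 + cst 3 * x1 * x2 * ppow x3 2 * x4
          + cst 3 * x1 * ppow x2 2 * x3 * ppow x4 2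
          + ppow x2 3 * (ppow x3 2 + x1 * ppow x4 3 + vc * x1 * x3 * x5)).
Definition eps0 : pexpr := E0 / (ppow x0 3 * ppow x2 3 * x3).
Definition gam0 : pexpr := ppow x0 2 / (x1 * x3 * x5).

(* The factors R_j(c, x) with e_i^c(x) = (x_j R_j(c, x))_j. *)
Definition Rfac (i : 'I_3) (j : 'I_6) : pexpr :=
  match val i, val j with
  | 1%N, 1%N => C1 | 1%N, 3%N => C3 | 1%N, 5%N => C5 | 1%N, _ => one
  | 2%N, 2%N => C2 | 2%N, 4%N => C4 | 2%N, _ => one
  | _, 0%N => D0 / (vc * E0)
  | _, 1%N => F0 / (vc * E0)
  | _, 2%N => G0 / (vc * E0)
  | _, 3%N => (D0 * H0) / (ppow vc 2 * E0 * F0)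
  | _, 4%N => D0 / (vc * G0)
  | _, _ => D0 / (vc * H0)
  end.

Definition epsG (i : 'I_3) : pexpr :=
  match val i with 0%N => eps0 | 1%N => eps1 | _ => eps2 end.
Definition gamG (i : 'I_3) : pexpr :=
  match val i with 0%N => gam0 | 1%N => gam1 | _ => gam2 end.

Local Close Scope pexpr_scope.

Definition eX (i : 'I_3) (n : vec6) : vec6 := [ffun j => n j + UD (Rfac i j) 1 n].
Definition fX (i : 'I_3) (n : vec6) : vec6 := [ffun j => n j + UD (Rfac i j) (-1) n].
(* gamma_i does not involve c, so the value of k is irrelevant. *)
Definition wtX (i : 'I_3) (n : vec6) : int := UD (gamG i) 0 n.
Definition epsX (i : 'I_3) (n : vec6) : int := UD (epsG i) 0 n.
Definition phiX (i : 'I_3) (n : vec6) : int := epsX i n + wtX i n.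

Definition inB (b : vec6) : bool := odd `|b (inord 2)|%N == odd `|b (inord 3)|%N.
Definition Binf := {b : vec6 | inB b}.

Section Binf_ops.
Variable b : vec6.
Let b1 := b (inord 0). Let b2 := b (inord 1). Let b3 := b (inord 2).
Let bb3 := b (inord 3). Let bb2 := b (inord 4). Let bb1 := b (inord 5).

Definition pos (y : int) : int := Num.max y 0.
Definition half (y : int) : int := (y %/ 2)%Z.

Definition sB : int := b1 + b2 + half (b3 + bb3) + bb2 + bb1.
Definition z1 : int := bb1 - b1.
Definition z2 : int := bb2 - bb3.
Definition z3 : int := b3 - b2.
Definition z4 : int := half (bb3 - b3).
Definition maxA : int :=
  maxl [:: 0; z1; z1 + z2; z1 + z2 + 3 * z4; z1 + z2 + z3 + 3 * z4;
           2 * z1 + z2 + z3 + 3 * z4].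

Definition epsB_ (i : 'I_3) : int :=
  match val i with
  | 0%N => - sB + maxA - (2 * z1 + z2 + z3 + 3 * z4)
  | 1%N => bb1 + pos (bb3 - bb2 + pos (b2 - b3))
  | _ => bb2 + half (pos (b3 - bb3))
  end.
Definition phiB_ (i : 'I_3) : int :=
  match val i with
  | 0%N => - sB + maxA
  | 1%N => b1 + pos (b3 - b2 + pos (bb2 - bb3))
  | _ => b2 + half (pos (bb3 - b3))
  end.

Definition E1 := [&& z1 + z2 + z3 + 3 * z4 < 0, z1 + z2 + 3 * z4 < 0, z1 + z2 < 0 & z1 < 0].
Definition E2 := [&& z1 + z2 + z3 + 3 * z4 < 0, z2 + 3 * z4 < 0, z2 < 0 & z1 >= 0].
Definition E3 := [&& z1 + z3 + 3 * z4 < 0, z3 + 3 * z4 < 0, z4 < 0, z2 >= 0 & z1 + z2 >= 0].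
Definition E4 := [&& z1 + z2 + 3 * z4 >= 0, z2 + 3 * z4 >= 0, z4 >= 0, z3 < 0 & z1 + z3 < 0].
Definition E5 := [&& z1 + z2 + z3 + 3 * z4 >= 0, z3 + 3 * z4 >= 0, z3 >= 0 & z1 < 0].
Definition E6 := [&& z1 + z2 + z3 + 3 * z4 >= 0, z1 + z3 + 3 * z4 >= 0, z1 + z3 >= 0 & z1 >= 0].
Definition F1 := [&& z1 + z2 + z3 + 3 * z4 <= 0, z1 + z2 + 3 * z4 <= 0, z1 + z2 <= 0 & z1 <= 0].
Definition F2 := [&& z1 + z2 + z3 + 3 * z4 <= 0, z2 + 3 * z4 <= 0, z2 <= 0 & z1 > 0].
Definition F3 := [&& z1 + z3 + 3 * z4 <= 0, z3 + 3 * z4 <= 0, z4 <= 0, z2 > 0 & z1 + z2 > 0].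
Definition F4 := [&& z1 + z2 + 3 * z4 > 0, z2 + 3 * z4 > 0, z4 > 0, z3 <= 0 & z1 + z3 <= 0].
Definition F5 := [&& z1 + z2 + z3 + 3 * z4 > 0, z3 + 3 * z4 > 0, z3 > 0 & z1 <= 0].
Definition F6 := [&& z1 + z2 + z3 + 3 * z4 > 0, z1 + z3 + 3 * z4 > 0, z1 + z3 > 0 & z1 > 0].

Definition eB_ (i : 'I_3) : vec6 :=
  match val i with
  | 0%N =>
      if E1 then mk6 (b1 - 1) b2 b3 bb3 bb2 bb1
      else if E2 then mk6 b1 b2 (b3 - 1) (bb3 - 1) bb2 (bb1 + 1)
      else if E3 then mk6 b1 b2 (b3 - 2) bb3 (bb2 + 1) bb1
      else if E4 then mk6 b1 (b2 - 1) b3 (bb3 + 2) bb2 bb1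
      else if E5 then mk6 (b1 - 1) b2 (b3 + 1) (bb3 + 1) bb2 bb1
      else mk6 b1 b2 b3 bb3 bb2 (bb1 + 1)
  | 1%N =>
      if bb2 - bb3 >= pos (b2 - b3) then mk6 b1 b2 b3 bb3 (bb2 + 1) (bb1 - 1)
      else if (bb2 - bb3 < 0) && (0 <= b3 - b2) then mk6 b1 b2 (b3 + 1) (bb3 - 1) bb2 bb1
      else (* pos (bb2 - bb3) < b2 - b3 *) mk6 (b1 + 1) (b2 - 1) b3 bb3 bb2 bb1
  | _ =>
      if bb3 >= b3 then mk6 b1 b2 b3 (bb3 + 2) (bb2 - 1) bb1
      else mk6 b1 (b2 + 1) (b3 - 2) bb3 bb2 bb1
  end.

Definition fB_ (i : 'I_3) : vec6 :=
  match val i with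
  | 0%N =>
      if F1 then mk6 (b1 + 1) b2 b3 bb3 bb2 bb1
      else if F2 then mk6 b1 b2 (b3 + 1) (bb3 + 1) bb2 (bb1 - 1)
      else if F3 then mk6 b1 b2 (b3 + 2) bb3 (bb2 - 1) bb1
      else if F4 then mk6 b1 (b2 + 1) b3 (bb3 - 2) bb2 bb1
      else if F5 then mk6 (b1 + 1) b2 (b3 - 1) (bb3 - 1) bb2 bb1
      else mk6 b1 b2 b3 bb3 bb2 (bb1 - 1)
  | 1%N =>
      if pos (bb2 - bb3) <= b2 - b3 then mk6 (b1 - 1) (b2 + 1) b3 bb3 bb2 bb1
      else if (bb2 - bb3 <= 0) && (0 < b3 - b2) then mk6 b1 b2 (b3 - 1) (bb3 + 1) bb2 bb1
      else (* bb2 - bb3 > pos (b2 - b3) *) mk6 b1 b2 b3 bb3 (bb2 - 1) (bb1 + 1)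
  | _ =>
      if bb3 <= b3 then mk6 b1 (b2 - 1) (b3 + 2) bb3 bb2 bb1
      else mk6 b1 b2 b3 (bb3 - 2) (bb2 + 1) bb1
  end.
End Binf_ops.

Definition eB (i : 'I_3) (b : vec6) : vec6 := eB_ b i.
Definition fB (i : 'I_3) (b : vec6) : vec6 := fB_ b i.
Definition epsB (i : 'I_3) (b : vec6) : int := epsB_ b i.
Definition phiB (i : 'I_3) (b : vec6) : int := phiB_ b i.
Definition wtB (i : 'I_3) (b : vec6) : int := phiB i b - epsB i b.

(* Main.v *)
Require Import Defs.
From HB Require Import structures.
From mathcomp Require Import all_boot all_order all_algebra.
From mathcomp Require Import zify.
Set Implicit Arguments. Unset Strict Implicit. Unset Printing Implicit Defensive.
Import Order.TTheory GRing.Theory Num.Theory.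
Local Open Scope ring_scope.

Lemma foldr_max_ge (a : int) s : a <= foldr Num.max a s /\ forall y, y \in s -> y <= foldr Num.max a s.
Proof.
elim: s => [|x s [IH1 IH2]] /=; first by split.
split; first by rewrite le_max IH1 orbT.
move=> y; rewrite inE => /orP [/eqP ->|/IH2 H]; by rewrite le_max ?lexx // H orbT.
Qed.

Lemma foldr_max_mem (a : int) s : foldr Num.max a s \in a :: s.
Proof.
elim: s => [|x s IH] /=; first by rewrite inE.
case: (leP x (foldr Num.max a s)) => _.
  by move: IH; rewrite !inE => /orP [->|->]; rewrite ?orbT.
by rewrite !inE eqxx orbT.
Qed.

Lemma maxl_ge s y : y \in s -> y <= maxl s.
Proof. by move=> Hy; apply: (proj2 (foldr_max_ge _ _)). Qed.

Lemma maxl_mem s : s != [::] -> maxl s \in s.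
Proof.
case: s => [//|x s] _; have := foldr_max_mem x (x :: s).
rewrite /maxl /= inE => /orP [/eqP ->|//]; by rewrite inE eqxx.
Qed.

Lemma maxl_eq s v : v \in s -> all (fun y => y <= v) s -> maxl s = v.
Proof.
move=> Hv /allP Ha; have Hs : s != [::] by case: s Hv Ha.
have H1 := Ha _ (maxl_mem Hs); have H2 := maxl_ge Hv; apply/eqP; by rewrite eq_le H1 H2.
Qed.

Definition wf (p : ppoly) := (p != [::]) && all (fun m : mono => size m.2 == 7%N) p.

Lemma lin_mul k n (m1 m2 : mono) : size m1.2 = 7%N -> size m2.2 = 7%N ->
  mono_lin k n (mono_mul m1 m2) = mono_lin k n m1 + mono_lin k n m2.
Proof.
move=> H1 H2; rewrite /mono_lin -big_split; apply: eq_bigr => i _ /=.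
rewrite (nth_map (0, 0)) ?size_zip ?H1 ?H2 ?minnn //.
by rewrite nth_zip ?H1 ?H2 //= mulrDl.
Qed.

Lemma wf_mul p q : wf p -> wf q -> wf (ppoly_mul p q).
Proof.
case/andP=> Hp /allP Ap /andP [Hq /allP Aq]; apply/andP; split.
  by case: p Hp Ap => // m1 p _ _; case: q Hq Aq => // m2 q.
apply/allP=> m /allpairsP [[m1 m2] /= [i1 i2 ->]] /=.
rewrite size_map size_zip (eqP (Ap _ i1)) (eqP (Aq _ i2)) //.
Qed.

Lemma wf_cat p q : wf p -> wf q -> wf (p ++ q).
Proof.
case/andP=> Hp Ap /andP [Hq Aq]; apply/andP; split; last by rewrite all_cat Ap Aq.
by case: p Hp {Ap}.
Qed.

Lemma UDpoly_mul p q k n : wf p -> wf q ->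
  UDpoly (ppoly_mul p q) k n = UDpoly p k n + UDpoly q k n.
Proof.
case/andP=> Hp /allP Ap; case/andP=> Hq /allP Aq.
rewrite /UDpoly.
have nP : [seq mono_lin k n m | m <- p] != [::] by case: p Hp {Ap}.
have nQ : [seq mono_lin k n m | m <- q] != [::] by case: q Hq {Aq}.
have /mapP [m1 i1 e1] := maxl_mem nP.
have /mapP [m2 i2 e2] := maxl_mem nQ.
apply: maxl_eq.
  apply/mapP; exists (mono_mul m1 m2); first by apply/allpairsP; exists (m1, m2).
  by rewrite lin_mul ?(eqP (Ap _ i1)) ?(eqP (Aq _ i2)) // e1 e2.
apply/allP => y /mapP [m /allpairsP [[a b] /= [ia ib ->]] ->].
rewrite lin_mul ?(eqP (Ap _ ia)) ?(eqP (Aq _ ib)) //.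
by apply: lerD; apply: maxl_ge; apply: map_f.
Qed.

Lemma UDpoly_cat p q k n : wf p -> wf q ->
  UDpoly (p ++ q) k n = Num.max (UDpoly p k n) (UDpoly q k n).
Proof.
case/andP=> Hp _; case/andP=> Hq _.
rewrite /UDpoly.
have nP : [seq mono_lin k n m | m <- p] != [::] by case: p Hp.
have nQ : [seq mono_lin k n m | m <- q] != [::] by case: q Hq.
have mP := maxl_mem nP; have mQ := maxl_mem nQ.
apply: maxl_eq.
  rewrite map_cat mem_cat; case: (leP (maxl [seq mono_lin k n m | m <- p]) (maxl [seq mono_lin k n m | m <- q])) => _.
  by rewrite mQ orbT. by rewrite mP.
apply/allP => y; rewrite map_cat mem_cat => /orP [] /maxl_ge H; by rewrite le_max H ?orbT.
Qed.

Lemma maxl1 x : maxl [:: x] = x.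
Proof. by rewrite /maxl /= maxxx. Qed.

Fixpoint trop (e : pexpr) (k : int) (n : vec6) : int :=
  match e with
  | PV j => match j with 0%N => k | j'.+1 => if (j' < 6)%N then n (inord j') else 0 end
  | PK _ => 0
  | PAdd a b => Num.max (trop a k n) (trop b k n)
  | PMul a b => trop a k n + trop b k n
  | PDiv a b => trop a k n - trop b k n
  end.

Lemma wf_var j : wf (ppoly_var j).
Proof. by []. Qed.
Lemma wf_const j : wf (ppoly_const j).
Proof. by []. Qed.

Lemma UD_var j k n : UDpoly (ppoly_var j) k n = trop (PV j) k n.
Proof.
rewrite /UDpoly /ppoly_var map_cons maxl1 /mono_lin.
case: (ltnP j 7) => hj.
  rewrite (bigD1 (Ordinal hj)) // big1 => [|i /negbTE Hi]; last first.
    rewrite (nth_map 0%N) ?size_iota // nth_iota // add0n.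
    have -> : (i == j :> nat) = false.
      apply/negP => /eqP E; move: Hi; have -> : i = Ordinal hj by apply/val_inj. by rewrite eqxx.
    by rewrite mul0r.
  rewrite (nth_map 0%N) ?size_iota // nth_iota // add0n eqxx mul1r /= addr0.
  case: j hj => [//|j hj] /=; rewrite ltnS in hj; rewrite hj.
  rewrite (nth_map ord0) ?size_enum_ord //; congr (n _); apply/val_inj.
  by rewrite /= nth_enum_ord // inordK.
rewrite big1 => [|i _]; last first.
  rewrite (nth_map 0%N) ?size_iota // nth_iota // add0n.
  have -> : (i == j :> nat) = false by apply/negP => /eqP E; move: (ltn_ord i); rewrite E; lia.
  by rewrite mul0r.
by case: j hj => [//|j hj] /=; rewrite ltnS leqNgt in hj; rewrite (negbTE hj).
Qed.

Lemma UD_const j k n : UDpoly (ppoly_const j) k n = 0.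
Proof. rewrite /UDpoly /ppoly_const map_cons maxl1 /mono_lin big1 // => i _. by rewrite nth_nseq; case: ifP; rewrite mul0r. Qed.

Lemma UD_trop_gen e k n : [/\ wf (to_frac e).1, wf (to_frac e).2 &
   UDpoly (to_frac e).1 k n - UDpoly (to_frac e).2 k n = trop e k n].
Proof.
elim: e => [j|j|a [wa1 wa2 IHa] b [wb1 wb2 IHb]|a [wa1 wa2 IHa] b [wb1 wb2 IHb]|a [wa1 wa2 IHa] b [wb1 wb2 IHb]].
- split; [exact: wf_var|exact: wf_const|].
  change (UDpoly (ppoly_var j) k n - UDpoly (ppoly_const 0) k n = trop (PV j) k n); rewrite UD_var UD_const; lia.
- split; [exact: wf_const|exact: wf_const|].
  change (UDpoly (ppoly_const j) k n - UDpoly (ppoly_const 0) k n = trop (PK j) k n); rewrite !UD_const /=; lia.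
- move: wa1 wa2 IHa wb1 wb2 IHb => /=; case: (to_frac a) => g1 h1; case: (to_frac b) => g2 h2 /= wg1 wh1 Ea wg2 wh2 Eb.
  rewrite !wf_cat ?wf_mul //; split => //.
  rewrite UDpoly_cat ?wf_mul // !UDpoly_mul // -Ea -Eb /=; lia.
- move: wa1 wa2 IHa wb1 wb2 IHb => /=; case: (to_frac a) => g1 h1; case: (to_frac b) => g2 h2 /= wg1 wh1 Ea wg2 wh2 Eb.
  rewrite !wf_mul //; split => //.
  rewrite !UDpoly_mul // -Ea -Eb; lia.
- move: wa1 wa2 IHa wb1 wb2 IHb => /=; case: (to_frac a) => g1 h1; case: (to_frac b) => g2 h2 /= wg1 wh1 Ea wg2 wh2 Eb.
  rewrite !wf_mul //; split => //.
  rewrite !UDpoly_mul // -Ea -Eb; lia.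
Qed.

Lemma UD_trop e k n : UD e k n = trop e k n.
Proof. by case: (UD_trop_gen e k n). Qed.


Lemma mk60 a0 a1 a2 a3 a4 a5 : mk6 a0 a1 a2 a3 a4 a5 (inord 0) = a0.
Proof. by rewrite /mk6 ffunE inordK. Qed.
Lemma mk61 a0 a1 a2 a3 a4 a5 : mk6 a0 a1 a2 a3 a4 a5 (inord 1) = a1.
Proof. by rewrite /mk6 ffunE inordK. Qed.
Lemma mk62 a0 a1 a2 a3 a4 a5 : mk6 a0 a1 a2 a3 a4 a5 (inord 2) = a2.
Proof. by rewrite /mk6 ffunE inordK. Qed.
Lemma mk63 a0 a1 a2 a3 a4 a5 : mk6 a0 a1 a2 a3 a4 a5 (inord 3) = a3.
Proof. by rewrite /mk6 ffunE inordK. Qed.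
Lemma mk64 a0 a1 a2 a3 a4 a5 : mk6 a0 a1 a2 a3 a4 a5 (inord 4) = a4.
Proof. by rewrite /mk6 ffunE inordK. Qed.
Lemma mk65 a0 a1 a2 a3 a4 a5 : mk6 a0 a1 a2 a3 a4 a5 (inord 5) = a5.
Proof. by rewrite /mk6 ffunE inordK. Qed.
Definition mk6E := (mk60, mk61, mk62, mk63, mk64, mk65).

Lemma vec6_eta (n : vec6) : n = mk6 (n (inord 0)) (n (inord 1)) (n (inord 2)) (n (inord 3)) (n (inord 4)) (n (inord 5)).
Proof.
apply/ffunP => -[[|[|[|[|[|[|j]]]]]] Hj]; rewrite ffunE //=; try (congr (n _); apply: val_inj; by rewrite /= inordK).
Qed.

Definition Omv (n : vec6) : vec6 :=
  mk6 (n (inord 5)) (n (inord 4) - n (inord 5)) (n (inord 3) - 2 * n (inord 4))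
      (2 * n (inord 2) - n (inord 3)) (n (inord 1) - n (inord 2)) (n (inord 0) - n (inord 1)).

Lemma inB_Omv n : inB (Omv n).
Proof. rewrite /inB /Omv !mk6E; lia. Qed.

Definition Omega (n : vec6) : Binf := exist _ (Omv n) (inB_Omv n).

Definition Oinv (b : vec6) : vec6 :=
  let n5 := b (inord 0) in let n4 := b (inord 0) + b (inord 1) in
  let n3 := b (inord 2) + 2 * n4 in let n2 := Defs.half (b (inord 3) + n3) in
  let n1 := b (inord 4) + n2 in let n0 := b (inord 5) + n1 in
  mk6 n0 n1 n2 n3 n4 n5.

Lemma Omega_bij : bijective Omega.
Proof.
exists (fun b => Oinv (val b)).
  move=> n; rewrite /Oinv /= /Omv !mk6E /Defs.half [RHS]vec6_eta; congr mk6; lia.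
move=> [b Hb]; apply: val_inj; rewrite /= /Omv /Oinv !mk6E [RHS]vec6_eta.
move: Hb; rewrite /inB /Defs.half => Hb; congr mk6; lia.
Qed.


Lemma RfacI0 i : Rfac i (inord 0) = Rfac i (@Ordinal 6 0 isT). Proof. by congr Rfac; apply: val_inj; rewrite /= inordK. Qed.
Lemma RfacI1 i : Rfac i (inord 1) = Rfac i (@Ordinal 6 1 isT). Proof. by congr Rfac; apply: val_inj; rewrite /= inordK. Qed.
Lemma RfacI2 i : Rfac i (inord 2) = Rfac i (@Ordinal 6 2 isT). Proof. by congr Rfac; apply: val_inj; rewrite /= inordK. Qed.
Lemma RfacI3 i : Rfac i (inord 3) = Rfac i (@Ordinal 6 3 isT). Proof. by congr Rfac; apply: val_inj; rewrite /= inordK. Qed.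
Lemma RfacI4 i : Rfac i (inord 4) = Rfac i (@Ordinal 6 4 isT). Proof. by congr Rfac; apply: val_inj; rewrite /= inordK. Qed.
Lemma RfacI5 i : Rfac i (inord 5) = Rfac i (@Ordinal 6 5 isT). Proof. by congr Rfac; apply: val_inj; rewrite /= inordK. Qed.
Definition RfacI := (RfacI0, RfacI1, RfacI2, RfacI3, RfacI4, RfacI5).

Lemma OeX i n : Omv (eX i n) = mk6
  (n (inord 5) + trop (Rfac i (inord 5)) 1 n)
  ((n (inord 4) + trop (Rfac i (inord 4)) 1 n) - (n (inord 5) + trop (Rfac i (inord 5)) 1 n))
  ((n (inord 3) + trop (Rfac i (inord 3)) 1 n) - 2 * (n (inord 4) + trop (Rfac i (inord 4)) 1 n))
  (2 * (n (inord 2) + trop (Rfac i (inord 2)) 1 n) - (n (inord 3) + trop (Rfac i (inord 3)) 1 n))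
  ((n (inord 1) + trop (Rfac i (inord 1)) 1 n) - (n (inord 2) + trop (Rfac i (inord 2)) 1 n))
  ((n (inord 0) + trop (Rfac i (inord 0)) 1 n) - (n (inord 1) + trop (Rfac i (inord 1)) 1 n)).
Proof. by rewrite /Omv /eX !ffunE !UD_trop. Qed.

Lemma OfX i n : Omv (fX i n) = mk6
  (n (inord 5) + trop (Rfac i (inord 5)) (-1) n)
  ((n (inord 4) + trop (Rfac i (inord 4)) (-1) n) - (n (inord 5) + trop (Rfac i (inord 5)) (-1) n))
  ((n (inord 3) + trop (Rfac i (inord 3)) (-1) n) - 2 * (n (inord 4) + trop (Rfac i (inord 4)) (-1) n))
  (2 * (n (inord 2) + trop (Rfac i (inord 2)) (-1) n) - (n (inord 3) + trop (Rfac i (inord 3)) (-1) n))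
  ((n (inord 1) + trop (Rfac i (inord 1)) (-1) n) - (n (inord 2) + trop (Rfac i (inord 2)) (-1) n))
  ((n (inord 0) + trop (Rfac i (inord 0)) (-1) n) - (n (inord 1) + trop (Rfac i (inord 1)) (-1) n)).
Proof. by rewrite /Omv /fX !ffunE !UD_trop. Qed.

Lemma addmaxl (a b c : int) : Num.max a b + c = Num.max (a + c) (b + c).
Proof. lia. Qed.
Lemma addmaxr (a b c : int) : c + Num.max a b = Num.max (c + a) (c + b).
Proof. lia. Qed.



Lemma part1 n : let i := @Ordinal 3 1 isT in
  [/\ Omv (eX i n) = eB i (Omv n), Omv (fX i n) = fB i (Omv n),
      epsB i (Omv n) = epsX i n, phiB i (Omv n) = phiX i n & wtB i (Omv n) = wtX i n].
Proof.
move=> i; rewrite OeX OfX !RfacI /eB /fB /eB_ /fB_ /wtB /phiB /epsB /phiX /wtX /epsX /phiB_ /epsB_ !UD_trop /Omv !mk6E /= /pos.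
split.
- case: ifP => h1; [|case: ifP => h2]; congr mk6; lia.
- case: ifP => h1; [|case: ifP => h2]; congr mk6; lia.
- rewrite /Defs.half; lia.
- rewrite /Defs.half; lia.
- rewrite /Defs.half; lia.
Qed.

Lemma part2 n : let i := @Ordinal 3 2 isT in
  [/\ Omv (eX i n) = eB i (Omv n), Omv (fX i n) = fB i (Omv n),
      epsB i (Omv n) = epsX i n, phiB i (Omv n) = phiX i n & wtB i (Omv n) = wtX i n].
Proof.
move=> i; rewrite OeX OfX !RfacI /eB /fB /eB_ /fB_ /wtB /phiB /epsB /phiX /wtX /epsX /phiB_ /epsB_ !UD_trop /Omv !mk6E /= /pos.
split.
- case: ifP => h1; congr mk6; lia.
- case: ifP => h1; congr mk6; lia.
- rewrite /Defs.half; lia.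
- rewrite /Defs.half; lia.
- rewrite /Defs.half; lia.
Qed.



Ltac blkt := rewrite /E1 /E2 /E3 /E4 /E5 /E6 /F1 /F2 /F3 /F4 /F5 /F6 /z1 /z2 /z3 /z4 /Omv !mk6E /Defs.half /= => H; lia.
Lemma blkE1D n : E1 (Omv n) -> trop D0 1 n = n (inord 1) + 3 * n (inord 2) + 2 * n (inord 3) + n (inord 5).
Proof. blkt. Qed.
Lemma blkE1F n : E1 (Omv n) -> trop F0 1 n = n (inord 1) + 3 * n (inord 2) + 2 * n (inord 3) + n (inord 5).
Proof. blkt. Qed.
Lemma blkE1G n : E1 (Omv n) -> trop G0 1 n = n (inord 1) + 3 * n (inord 2) + 2 * n (inord 3) + n (inord 5).
Proof. blkt. Qed.
Lemma blkE1H n : E1 (Omv n) -> trop H0 1 n = n (inord 1) + 3 * n (inord 2) + 2 * n (inord 3) + n (inord 5).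
Proof. blkt. Qed.
Lemma blkE1E k n : E1 (Omv n) -> trop E0 k n = n (inord 1) + 3 * n (inord 2) + 2 * n (inord 3) + n (inord 5).
Proof. blkt. Qed.
Lemma blkE2D n : E2 (Omv n) -> trop D0 1 n = 1 + n (inord 0) + 3 * n (inord 2) + 2 * n (inord 3).
Proof. blkt. Qed.
Lemma blkE2F n : E2 (Omv n) -> trop F0 1 n = n (inord 0) + 3 * n (inord 2) + 2 * n (inord 3).
Proof. blkt. Qed.
Lemma blkE2G n : E2 (Omv n) -> trop G0 1 n = n (inord 0) + 3 * n (inord 2) + 2 * n (inord 3).
Proof. blkt. Qed.
Lemma blkE2H n : E2 (Omv n) -> trop H0 1 n = n (inord 0) + 3 * n (inord 2) + 2 * n (inord 3).
Proof. blkt. Qed.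
Lemma blkE2E k n : E2 (Omv n) -> trop E0 k n = n (inord 0) + 3 * n (inord 2) + 2 * n (inord 3).
Proof. blkt. Qed.
Lemma blkE3D n : E3 (Omv n) -> trop D0 1 n = 1 + n (inord 0) + n (inord 1) + 3 * n (inord 3).
Proof. blkt. Qed.
Lemma blkE3F n : E3 (Omv n) -> trop F0 1 n = 1 + n (inord 0) + n (inord 1) + 3 * n (inord 3).
Proof. blkt. Qed.
Lemma blkE3G n : E3 (Omv n) -> trop G0 1 n = n (inord 0) + n (inord 1) + 3 * n (inord 3).
Proof. blkt. Qed.
Lemma blkE3H n : E3 (Omv n) -> trop H0 1 n = n (inord 0) + n (inord 1) + 3 * n (inord 3).
Proof. blkt. Qed.
Lemma blkE3E k n : E3 (Omv n) -> trop E0 k n = n (inord 0) + n (inord 1) + 3 * n (inord 3).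
Proof. blkt. Qed.
Lemma blkE4D n : E4 (Omv n) -> trop D0 1 n = 1 + n (inord 0) + n (inord 1) + 3 * n (inord 2) + 3 * n (inord 4).
Proof. blkt. Qed.
Lemma blkE4F n : E4 (Omv n) -> trop F0 1 n = 1 + n (inord 0) + n (inord 1) + 3 * n (inord 2) + 3 * n (inord 4).
Proof. blkt. Qed.
Lemma blkE4G n : E4 (Omv n) -> trop G0 1 n = 1 + n (inord 0) + n (inord 1) + 3 * n (inord 2) + 3 * n (inord 4).
Proof. blkt. Qed.
Lemma blkE4H n : E4 (Omv n) -> trop H0 1 n = n (inord 0) + n (inord 1) + 3 * n (inord 2) + 3 * n (inord 4).
Proof. blkt. Qed.
Lemma blkE4E k n : E4 (Omv n) -> trop E0 k n = n (inord 0) + n (inord 1) + 3 * n (inord 2) + 3 * n (inord 4).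
Proof. blkt. Qed.
Lemma blkE5D n : E5 (Omv n) -> trop D0 1 n = 1 + n (inord 0) + n (inord 1) + 3 * n (inord 2) + n (inord 3) + n (inord 5).
Proof. blkt. Qed.
Lemma blkE5F n : E5 (Omv n) -> trop F0 1 n = 1 + n (inord 0) + n (inord 1) + 3 * n (inord 2) + n (inord 3) + n (inord 5).
Proof. blkt. Qed.
Lemma blkE5G n : E5 (Omv n) -> trop G0 1 n = 1 + n (inord 0) + n (inord 1) + 3 * n (inord 2) + n (inord 3) + n (inord 5).
Proof. blkt. Qed.
Lemma blkE5H n : E5 (Omv n) -> trop H0 1 n = 1 + n (inord 0) + n (inord 1) + 3 * n (inord 2) + n (inord 3) + n (inord 5).
Proof. blkt. Qed.
Lemma blkE5E k n : E5 (Omv n) -> trop E0 k n = n (inord 0) + n (inord 1) + 3 * n (inord 2) + n (inord 3) + n (inord 5).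
Proof. blkt. Qed.
Lemma blkE6D n : E6 (Omv n) -> trop D0 1 n = 2 * 1 + 2 * n (inord 0) + 3 * n (inord 2) + n (inord 3).
Proof. blkt. Qed.
Lemma blkE6F n : E6 (Omv n) -> trop F0 1 n = 1 + 2 * n (inord 0) + 3 * n (inord 2) + n (inord 3).
Proof. blkt. Qed.
Lemma blkE6G n : E6 (Omv n) -> trop G0 1 n = 1 + 2 * n (inord 0) + 3 * n (inord 2) + n (inord 3).
Proof. blkt. Qed.
Lemma blkE6H n : E6 (Omv n) -> trop H0 1 n = 1 + 2 * n (inord 0) + 3 * n (inord 2) + n (inord 3).
Proof. blkt. Qed.
Lemma blkE6E k n : E6 (Omv n) -> trop E0 k n = 2 * n (inord 0) + 3 * n (inord 2) + n (inord 3).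
Proof. blkt. Qed.
Lemma blkF1D n : F1 (Omv n) -> trop D0 (-1) n = n (inord 1) + 3 * n (inord 2) + 2 * n (inord 3) + n (inord 5).
Proof. blkt. Qed.
Lemma blkF1F n : F1 (Omv n) -> trop F0 (-1) n = n (inord 1) + 3 * n (inord 2) + 2 * n (inord 3) + n (inord 5).
Proof. blkt. Qed.
Lemma blkF1G n : F1 (Omv n) -> trop G0 (-1) n = n (inord 1) + 3 * n (inord 2) + 2 * n (inord 3) + n (inord 5).
Proof. blkt. Qed.
Lemma blkF1H n : F1 (Omv n) -> trop H0 (-1) n = n (inord 1) + 3 * n (inord 2) + 2 * n (inord 3) + n (inord 5).
Proof. blkt. Qed.
Lemma blkF1E k n : F1 (Omv n) -> trop E0 k n = n (inord 1) + 3 * n (inord 2) + 2 * n (inord 3) + n (inord 5).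
Proof. blkt. Qed.
Lemma blkF2D n : F2 (Omv n) -> trop D0 (-1) n = (-1) + n (inord 0) + 3 * n (inord 2) + 2 * n (inord 3).
Proof. blkt. Qed.
Lemma blkF2F n : F2 (Omv n) -> trop F0 (-1) n = n (inord 0) + 3 * n (inord 2) + 2 * n (inord 3).
Proof. blkt. Qed.
Lemma blkF2G n : F2 (Omv n) -> trop G0 (-1) n = n (inord 0) + 3 * n (inord 2) + 2 * n (inord 3).
Proof. blkt. Qed.
Lemma blkF2H n : F2 (Omv n) -> trop H0 (-1) n = n (inord 0) + 3 * n (inord 2) + 2 * n (inord 3).
Proof. blkt. Qed.
Lemma blkF2E k n : F2 (Omv n) -> trop E0 k n = n (inord 0) + 3 * n (inord 2) + 2 * n (inord 3).
Proof. blkt. Qed.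
Lemma blkF3D n : F3 (Omv n) -> trop D0 (-1) n = (-1) + n (inord 0) + n (inord 1) + 3 * n (inord 3).
Proof. blkt. Qed.
Lemma blkF3F n : F3 (Omv n) -> trop F0 (-1) n = (-1) + n (inord 0) + n (inord 1) + 3 * n (inord 3).
Proof. blkt. Qed.
Lemma blkF3G n : F3 (Omv n) -> trop G0 (-1) n = n (inord 0) + n (inord 1) + 3 * n (inord 3).
Proof. blkt. Qed.
Lemma blkF3H n : F3 (Omv n) -> trop H0 (-1) n = n (inord 0) + n (inord 1) + 3 * n (inord 3).
Proof. blkt. Qed.
Lemma blkF3E k n : F3 (Omv n) -> trop E0 k n = n (inord 0) + n (inord 1) + 3 * n (inord 3).
Proof. blkt. Qed.
Lemma blkF4D n : F4 (Omv n) -> trop D0 (-1) n = (-1) + n (inord 0) + n (inord 1) + 3 * n (inord 2) + 3 * n (inord 4).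
Proof. blkt. Qed.
Lemma blkF4F n : F4 (Omv n) -> trop F0 (-1) n = (-1) + n (inord 0) + n (inord 1) + 3 * n (inord 2) + 3 * n (inord 4).
Proof. blkt. Qed.
Lemma blkF4G n : F4 (Omv n) -> trop G0 (-1) n = (-1) + n (inord 0) + n (inord 1) + 3 * n (inord 2) + 3 * n (inord 4).
Proof. blkt. Qed.
Lemma blkF4H n : F4 (Omv n) -> trop H0 (-1) n = n (inord 0) + n (inord 1) + 3 * n (inord 2) + 3 * n (inord 4).
Proof. blkt. Qed.
Lemma blkF4E k n : F4 (Omv n) -> trop E0 k n = n (inord 0) + n (inord 1) + 3 * n (inord 2) + 3 * n (inord 4).
Proof. blkt. Qed.
Lemma blkF5D n : F5 (Omv n) -> trop D0 (-1) n = (-1) + n (inord 0) + n (inord 1) + 3 * n (inord 2) + n (inord 3) + n (inord 5).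
Proof. blkt. Qed.
Lemma blkF5F n : F5 (Omv n) -> trop F0 (-1) n = (-1) + n (inord 0) + n (inord 1) + 3 * n (inord 2) + n (inord 3) + n (inord 5).
Proof. blkt. Qed.
Lemma blkF5G n : F5 (Omv n) -> trop G0 (-1) n = (-1) + n (inord 0) + n (inord 1) + 3 * n (inord 2) + n (inord 3) + n (inord 5).
Proof. blkt. Qed.
Lemma blkF5H n : F5 (Omv n) -> trop H0 (-1) n = (-1) + n (inord 0) + n (inord 1) + 3 * n (inord 2) + n (inord 3) + n (inord 5).
Proof. blkt. Qed.
Lemma blkF5E k n : F5 (Omv n) -> trop E0 k n = n (inord 0) + n (inord 1) + 3 * n (inord 2) + n (inord 3) + n (inord 5).
Proof. blkt. Qed.
Lemma blkF6D n : F6 (Omv n) -> trop D0 (-1) n = 2 * (-1) + 2 * n (inord 0) + 3 * n (inord 2) + n (inord 3).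
Proof. blkt. Qed.
Lemma blkF6F n : F6 (Omv n) -> trop F0 (-1) n = (-1) + 2 * n (inord 0) + 3 * n (inord 2) + n (inord 3).
Proof. blkt. Qed.
Lemma blkF6G n : F6 (Omv n) -> trop G0 (-1) n = (-1) + 2 * n (inord 0) + 3 * n (inord 2) + n (inord 3).
Proof. blkt. Qed.
Lemma blkF6H n : F6 (Omv n) -> trop H0 (-1) n = (-1) + 2 * n (inord 0) + 3 * n (inord 2) + n (inord 3).
Proof. blkt. Qed.
Lemma blkF6E k n : F6 (Omv n) -> trop E0 k n = 2 * n (inord 0) + 3 * n (inord 2) + n (inord 3).
Proof. blkt. Qed.



Lemma eB0E b : eB (@Ordinal 3 0 isT) b =
  if E1 b then mk6 ((b (inord 0)) - 1) (b (inord 1)) (b (inord 2)) (b (inord 3)) (b (inord 4)) (b (inord 5))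
      else if E2 b then mk6 (b (inord 0)) (b (inord 1)) ((b (inord 2)) - 1) ((b (inord 3)) - 1) (b (inord 4)) ((b (inord 5)) + 1)
      else if E3 b then mk6 (b (inord 0)) (b (inord 1)) ((b (inord 2)) - 2) (b (inord 3)) ((b (inord 4)) + 1) (b (inord 5))
      else if E4 b then mk6 (b (inord 0)) ((b (inord 1)) - 1) (b (inord 2)) ((b (inord 3)) + 2) (b (inord 4)) (b (inord 5))
      else if E5 b then mk6 ((b (inord 0)) - 1) (b (inord 1)) ((b (inord 2)) + 1) ((b (inord 3)) + 1) (b (inord 4)) (b (inord 5))
      else  mk6 (b (inord 0)) (b (inord 1)) (b (inord 2)) (b (inord 3)) (b (inord 4)) ((b (inord 5)) + 1).
Proof. by []. Qed.
Lemma fB0E b : fB (@Ordinal 3 0 isT) b =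
  if F1 b then mk6 ((b (inord 0)) + 1) (b (inord 1)) (b (inord 2)) (b (inord 3)) (b (inord 4)) (b (inord 5))
      else if F2 b then mk6 (b (inord 0)) (b (inord 1)) ((b (inord 2)) + 1) ((b (inord 3)) + 1) (b (inord 4)) ((b (inord 5)) - 1)
      else if F3 b then mk6 (b (inord 0)) (b (inord 1)) ((b (inord 2)) + 2) (b (inord 3)) ((b (inord 4)) - 1) (b (inord 5))
      else if F4 b then mk6 (b (inord 0)) ((b (inord 1)) + 1) (b (inord 2)) ((b (inord 3)) - 2) (b (inord 4)) (b (inord 5))
      else if F5 b then mk6 ((b (inord 0)) + 1) (b (inord 1)) ((b (inord 2)) - 1) ((b (inord 3)) - 1) (b (inord 4)) (b (inord 5))
      else  mk6 (b (inord 0)) (b (inord 1)) (b (inord 2)) (b (inord 3)) (b (inord 4)) ((b (inord 5)) - 1).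
Proof. by []. Qed.

Lemma Omv0 n : Omv n (inord 0) = n (inord 5).
Proof. by rewrite /Omv !mk6E. Qed.
Lemma Omv1 n : Omv n (inord 1) = n (inord 4) - n (inord 5).
Proof. by rewrite /Omv !mk6E. Qed.
Lemma Omv2 n : Omv n (inord 2) = n (inord 3) - 2 * n (inord 4).
Proof. by rewrite /Omv !mk6E. Qed.
Lemma Omv3 n : Omv n (inord 3) = 2 * n (inord 2) - n (inord 3).
Proof. by rewrite /Omv !mk6E. Qed.
Lemma Omv4 n : Omv n (inord 4) = n (inord 1) - n (inord 2).
Proof. by rewrite /Omv !mk6E. Qed.
Lemma Omv5 n : Omv n (inord 5) = n (inord 0) - n (inord 1).
Proof. by rewrite /Omv !mk6E. Qed.
Definition OmvE := (Omv0, Omv1, Omv2, Omv3, Omv4, Omv5).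
Lemma R00 k n : trop (Rfac (@Ordinal 3 0 isT) (inord 0)) k n = trop D0 k n - (k + trop E0 k n).
Proof. by rewrite !RfacI. Qed.
Lemma R01 k n : trop (Rfac (@Ordinal 3 0 isT) (inord 1)) k n = trop F0 k n - (k + trop E0 k n).
Proof. by rewrite !RfacI. Qed.
Lemma R02 k n : trop (Rfac (@Ordinal 3 0 isT) (inord 2)) k n = trop G0 k n - (k + trop E0 k n).
Proof. by rewrite !RfacI. Qed.
Lemma R03 k n : trop (Rfac (@Ordinal 3 0 isT) (inord 3)) k n = trop D0 k n + trop H0 k n - (k + k + trop E0 k n + trop F0 k n).
Proof. by rewrite !RfacI. Qed.
Lemma R04 k n : trop (Rfac (@Ordinal 3 0 isT) (inord 4)) k n = trop D0 k n - (k + trop G0 k n).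
Proof. by rewrite !RfacI. Qed.
Lemma R05 k n : trop (Rfac (@Ordinal 3 0 isT) (inord 5)) k n = trop D0 k n - (k + trop H0 k n).
Proof. by rewrite !RfacI. Qed.
Definition R0E := (R00, R01, R02, R03, R04, R05).

Lemma EallB b : E1 b = false -> E2 b = false -> E3 b = false -> E4 b = false -> E5 b = false -> E6 b.
Proof. rewrite /E1 /E2 /E3 /E4 /E5 /E6; lia. Qed.
Lemma FallB b : F1 b = false -> F2 b = false -> F3 b = false -> F4 b = false -> F5 b = false -> F6 b.
Proof. rewrite /F1 /F2 /F3 /F4 /F5 /F6; lia. Qed.

Lemma part0e n : Omv (eX (@Ordinal 3 0 isT) n) = eB (@Ordinal 3 0 isT) (Omv n).
Proof.
rewrite OeX !R0E eB0E !OmvE.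
case: ifP => h1.
  rewrite (blkE1D h1) (blkE1E 1 h1) (blkE1F h1) (blkE1G h1) (blkE1H h1); congr mk6; lia.
case: ifP => h2.
  rewrite (blkE2D h2) (blkE2E 1 h2) (blkE2F h2) (blkE2G h2) (blkE2H h2); congr mk6; lia.
case: ifP => h3.
  rewrite (blkE3D h3) (blkE3E 1 h3) (blkE3F h3) (blkE3G h3) (blkE3H h3); congr mk6; lia.
case: ifP => h4.
  rewrite (blkE4D h4) (blkE4E 1 h4) (blkE4F h4) (blkE4G h4) (blkE4H h4); congr mk6; lia.
case: ifP => h5.
  rewrite (blkE5D h5) (blkE5E 1 h5) (blkE5F h5) (blkE5G h5) (blkE5H h5); congr mk6; lia.
have h6 := EallB h1 h2 h3 h4 h5.
rewrite (blkE6D h6) (blkE6E 1 h6) (blkE6F h6) (blkE6G h6) (blkE6H h6); congr mk6; lia.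
Qed.

Lemma part0f n : Omv (fX (@Ordinal 3 0 isT) n) = fB (@Ordinal 3 0 isT) (Omv n).
Proof.
rewrite OfX !R0E fB0E !OmvE.
case: ifP => h1.
  rewrite (blkF1D h1) (blkF1E (-1) h1) (blkF1F h1) (blkF1G h1) (blkF1H h1); congr mk6; lia.
case: ifP => h2.
  rewrite (blkF2D h2) (blkF2E (-1) h2) (blkF2F h2) (blkF2G h2) (blkF2H h2); congr mk6; lia.
case: ifP => h3.
  rewrite (blkF3D h3) (blkF3E (-1) h3) (blkF3F h3) (blkF3G h3) (blkF3H h3); congr mk6; lia.
case: ifP => h4.
  rewrite (blkF4D h4) (blkF4E (-1) h4) (blkF4F h4) (blkF4G h4) (blkF4H h4); congr mk6; lia.
case: ifP => h5.
  rewrite (blkF5D h5) (blkF5E (-1) h5) (blkF5F h5) (blkF5G h5) (blkF5H h5); congr mk6; lia.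
have h6 := FallB h1 h2 h3 h4 h5.
rewrite (blkF6D h6) (blkF6E (-1) h6) (blkF6F h6) (blkF6G h6) (blkF6H h6); congr mk6; lia.
Qed.

Lemma teps0 k n : trop eps0 k n = trop E0 k n - (n (inord 0) + (n (inord 0) + n (inord 0)) + (n (inord 2) + (n (inord 2) + n (inord 2))) + n (inord 3)).
Proof. by []. Qed.
Lemma tgam0 k n : trop gam0 k n = n (inord 0) + n (inord 0) - (n (inord 1) + n (inord 3) + n (inord 5)).
Proof. by []. Qed.

Ltac fin0 h := move: h; rewrite /epsB /phiB /epsB_ /phiB_ /E1 /E2 /E3 /E4 /E5 /E6 /Defs.maxA /maxl /z1 /z2 /z3 /z4 /sB !OmvE /Defs.half /= => h; split; lia.

Lemma part0eps n : epsB (@Ordinal 3 0 isT) (Omv n) = epsX (@Ordinal 3 0 isT) n /\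
   phiB (@Ordinal 3 0 isT) (Omv n) = phiX (@Ordinal 3 0 isT) n.
Proof.
rewrite /phiX /epsX /wtX !UD_trop.
change (epsG (@Ordinal 3 0 isT)) with eps0; change (gamG (@Ordinal 3 0 isT)) with gam0.
rewrite teps0 tgam0.
case h1: (E1 (Omv n)); first by rewrite (blkE1E 0 h1); fin0 h1.
case h2: (E2 (Omv n)); first by rewrite (blkE2E 0 h2); fin0 h2.
case h3: (E3 (Omv n)); first by rewrite (blkE3E 0 h3); fin0 h3.
case h4: (E4 (Omv n)); first by rewrite (blkE4E 0 h4); fin0 h4.
case h5: (E5 (Omv n)); first by rewrite (blkE5E 0 h5); fin0 h5.
have h6 := EallB h1 h2 h3 h4 h5.
by rewrite (blkE6E 0 h6); fin0 h6.
Qed.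


Lemma valO x : val (Omega x) = Omv x.
Proof. by []. Qed.

Theorem theorem6p1 :
  exists Omega : vec6 -> Binf,
    bijective Omega /\
    forall (i : 'I_3) (n : vec6),
      [/\ val (Omega (eX i n)) = eB i (val (Omega n)),
          val (Omega (fX i n)) = fB i (val (Omega n)),
          epsB i (val (Omega n)) = epsX i n,
          phiB i (val (Omega n)) = phiX i n
        & wtB i (val (Omega n)) = wtX i n].
Proof.
exists Omega; split; first exact: Omega_bij.
move=> i n; rewrite !valO.
case: i => [[|[|[|m]]] Hi].
- rewrite (bool_irrelevance Hi isT).
  have [He Hp] := part0eps n.
  split; [exact: part0e | exact: part0f | exact: He | exact: Hp |].
  by rewrite /wtB He Hp /phiX addrC addKr.
- rewrite (bool_irrelevance Hi isT); exact: part1.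
- rewrite (bool_irrelevance Hi isT); exact: part2.
- by [].
Qed.
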